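(* Let $\kappa,\lambda$ be regular cardinals with $\aleph_0<\kappa$ and $\kappa^+<\lambda$, and let $S\subseteq\{\delta<\lambda:\operatorname{cf}\delta=\kappa\}$ be stationary in $\lambda$. Let $\langle c_\delta:\delta\in S\rangle$ be any sequence such that each $c_\delta\subseteq\delta$ is a club of $\delta$ of order type $\kappa$, and let $E'\subseteq\lambda$ be a club. Then there is a club $E\subseteq E'$ such that, setting $c'_\delta=c_\delta\cap E$ for $\delta\in S$: (1) each $c'_\delta$ is a closed subset of $\delta$; (2) for every club $E''\subseteq\lambda$ the set $\{\delta\in S: c'_\delta\subseteq E'',\ \sup c'_\delta=\delta,\ \operatorname{otp}c'_\delta=\kappa\}$ is stationary in $\lambda$.
   Context: $\operatorname{otp}$ denotes order type; a club of $\lambda$ is a closed unbounded subset of $\lambda$. *)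

(* Defs.v *)
(* Ordinals are represented by well-ordered types: an ordinal
   alpha is a type A with a strict well-order ltA (the elements of A are the
   ordinals below alpha).  All notions below are invariant under order
   isomorphism, so this faithfully represents ordinals/cardinals. *)
From Stdlib Require Import Classical.
Set Implicit Arguments.

Section WO.
Variables (L : Type) (lt : L -> L -> Prop).

Definition le (x y : L) : Prop := lt x y \/ x = y.

Definition well_order : Prop :=
  (forall x, ~ lt x x) /\
  (forall x y z, lt x y -> lt y z -> lt x z) /\
  (forall x y, lt x y \/ x = y \/ lt y x) /\
  well_founded lt.

Definition below (d : L) : L -> Prop := fun x => lt x d.

(* D is a (downward closed) domain, either all of L or an initial segment *)
Definition unbounded_in (D C : L -> Prop) : Prop :=
  forall x, D x -> exists y, C y /\ D y /\ le x y.

Definition closed_in (D C : L -> Prop) : Prop :=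
  forall g, D g ->
    (exists y, C y /\ lt y g) ->
    (forall x, lt x g -> exists y, C y /\ lt x y /\ lt y g) ->
    C g.

Definition subset (A B : L -> Prop) : Prop := forall x, A x -> B x.

Definition closed_subset_of (D C : L -> Prop) : Prop :=
  subset C D /\ closed_in D C.

Definition club_in (D C : L -> Prop) : Prop :=
  subset C D /\ closed_in D C /\ unbounded_in D C.

Definition club (C : L -> Prop) : Prop := club_in (fun _ => True) C.

Definition stationary (S : L -> Prop) : Prop :=
  forall C, club C -> exists x, S x /\ C x.

Definition is_sup (A : L -> Prop) (d : L) : Prop :=
  (forall y, A y -> le y d) /\
  (forall z, (forall y, A y -> le y z) -> le d z).

Variables (K : Type) (ltK : K -> K -> Prop).

Definition otp_eq (A : L -> Prop) : Prop :=
  exists f : K -> L,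
    (forall a b, ltK a b -> lt (f a) (f b)) /\
    (forall a, A (f a)) /\ (forall y, A y -> exists a, f a = y).

Definition otp_ge (A : L -> Prop) : Prop :=
  exists f : K -> L,
    (forall a b, ltK a b -> lt (f a) (f b)) /\ (forall a, A (f a)).

Definition cof_is (D : L -> Prop) : Prop :=
  (exists A, subset A D /\ unbounded_in D A /\ otp_eq A) /\
  (forall A, subset A D -> unbounded_in D A -> otp_ge A).

End WO.

Definition infinite (A : Type) : Prop := exists f : nat -> A, forall m n, f m = f n -> m = n.

Definition uncountable (A : Type) : Prop :=
  ~ exists f : A -> nat, forall a b, f a = f b -> a = b.

Definition regular (A : Type) (ltA : A -> A -> Prop) : Prop :=
  well_order ltA /\ infinite A /\ cof_is ltA ltA (fun _ : A => True).

(* kappa^+ < lambda: some delta < lambda has cardinality > kappa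
   (kappa^+ is the least ordinal of cardinality > kappa) *)
Definition succ_card_lt (K L : Type) (ltL : L -> L -> Prop) : Prop :=
  exists d : L, ~ exists f : {x : L | ltL x d} -> K,
      forall a b, f a = f b -> a = b.

(* Main.v *)
Require Import Defs.
From Stdlib Require Import Classical ClassicalEpsilon FunctionalExtensionality PropExtensionality Wellfounded.

Section Gen.
Variables (A : Type) (lt : A -> A -> Prop).
Hypothesis Hwo : well_order lt.

Lemma w_irr x : ~ lt x x. Proof. destruct Hwo as [H _]; auto. Qed.
Lemma w_trans x y z : lt x y -> lt y z -> lt x z.
Proof. destruct Hwo as [_ [H _]]; eauto. Qed.
Lemma w_tot x y : lt x y \/ x = y \/ lt y x.
Proof. destruct Hwo as [_ [_ [H _]]]; auto. Qed.
Lemma w_wf : well_founded lt. Proof. destruct Hwo as [_ [_ [_ H]]]; auto. Qed.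

Lemma w_nlt_le x y : ~ lt x y -> le lt y x.
Proof. intro H; destruct (w_tot x y) as [h|[h|h]]; unfold le; auto; tauto. Qed.
Lemma w_lt_nle x y : lt x y -> ~ le lt y x.
Proof. intros H [h|h]. apply (w_irr x); eauto using w_trans. subst; apply (w_irr x H). Qed.
Lemma w_le_lt x y z : le lt x y -> lt y z -> lt x z.
Proof. intros [h|h] H; subst; eauto using w_trans. Qed.
Lemma w_lt_le x y z : lt x y -> le lt y z -> lt x z.
Proof. intros H [h|h]; subst; eauto using w_trans. Qed.
Lemma w_le_trans x y z : le lt x y -> le lt y z -> le lt x z.
Proof. intros [h|h] H; subst; auto. left; eapply w_lt_le; eauto. Qed.
Lemma w_le_refl x : le lt x x. Proof. right; auto. Qed.
Lemma w_antisym x y : le lt x y -> le lt y x -> x = y.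
Proof. intros [h|h] H; auto. exfalso; exact (w_lt_nle _ _ h H). Qed.

Lemma w_least (P : A -> Prop) : (exists x, P x) -> exists x, P x /\ forall y, P y -> le lt x y.
Proof.
  intros [x0 Hx0]. apply NNPP; intro Hn.
  assert (forall x, ~ P x).
  { intro x. induction x as [x IH] using (well_founded_ind w_wf). intro Px.
    apply Hn. exists x. split; auto. intros y Py. apply NNPP; intro Hy.
    apply (IH y); auto. destruct (w_tot x y) as [h|[h|h]]; auto; exfalso; apply Hy; unfold le; auto. }
  eapply H; eauto.
Qed.

Lemma mono_ge (f : A -> A) : (forall a b, lt a b -> lt (f a) (f b)) -> forall x, le lt x (f x).
Proof.
  intros Hf x. apply w_nlt_le. induction x as [x IH] using (well_founded_ind w_wf).
  intro H. apply (IH (f x) H). apply Hf; auto.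
Qed.

Lemma mono_inj (B : Type) (ltB : B -> B -> Prop) (f : B -> A) :
  (forall x y, ltB x y \/ x = y \/ ltB y x) ->
  (forall a b, ltB a b -> lt (f a) (f b)) -> forall a b, f a = f b -> a = b.
Proof.
  intros T Hf a b E. destruct (T a b) as [h|[h|h]]; auto; apply Hf in h; rewrite E in h;
  exfalso; eapply w_irr; eauto.
Qed.

Definition lim (P : A -> Prop) (g : A) : Prop :=
  (exists y, P y /\ lt y g) /\ (forall w, lt w g -> exists y, P y /\ lt w y /\ lt y g).

Section Omega.
Variables (I : Type) (i0 : I) (D : A -> Prop) (C : I -> A -> Prop).
Hypothesis HD : forall x y, D y -> le lt x y -> D x.
Hypothesis Hun : forall i x, D x -> exists y, C i y /\ D y /\ lt x y.
Hypothesis HbI : forall h : I -> A, (forall i, D (h i)) -> exists z, D z /\ forall i, le lt (h i) z.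
Hypothesis Hbn : forall s : nat -> A, (forall n, D (s n)) -> exists z, D z /\ forall n, lt (s n) z.

Lemma omega_lim x : D x -> exists g, D g /\ lt x g /\ forall i, lim (C i) g.
Proof.
  intro Dx. pose (inh := inhabits x).
  pose (e := fun i y => epsilon inh (fun z => C i z /\ D z /\ lt y z)).
  assert (He : forall i y, D y -> C i (e i y) /\ D (e i y) /\ lt y (e i y)).
  { intros i y Dy. apply epsilon_spec. auto. }
  pose (nx := fun y => epsilon inh (fun z => D z /\ forall i, le lt (e i y) z)).
  assert (Hnx : forall y, D y -> D (nx y) /\ forall i, le lt (e i y) (nx y)).
  { intros y Dy. apply epsilon_spec. apply HbI. intro i; apply He; auto. }
  pose (s := fun n => Nat.iter n nx x).
  assert (Ds : forall n, D (s n)).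
  { induction n; simpl; auto. apply Hnx; auto. }
  assert (Hss : forall i n, lt (s n) (e i (s n)) /\ le lt (e i (s n)) (s (S n))).
  { intros i n. split. apply He; auto. apply (Hnx (s n) (Ds n)). }
  destruct (w_least (fun z => D z /\ forall n, lt (s n) z)) as [g [[Dg Hg] Hmin]].
  { apply Hbn; auto. }
  exists g. split; auto. split. apply (Hg 0).
  intro i. split.
  - exists (e i (s 0)). split. apply He; auto. eapply w_le_lt. apply Hss. apply Hg.
  - intros w Hw. assert (exists n, le lt w (s n)).
    { apply NNPP; intro Hn. assert (le lt g w).
      { apply Hmin. split. apply (HD w g); auto. left; auto.
        intro n. apply NNPP; intro h. apply Hn. exists n. apply w_nlt_le; auto. }
      exact (w_lt_nle _ _ Hw H). }
    destruct H as [n Hn]. exists (e i (s n)). split. apply He; auto. split.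
    eapply w_le_lt; eauto. apply Hss. eapply w_le_lt. apply Hss. apply Hg.
Qed.
End Omega.

Section Reg.
Hypothesis Hcof : forall X, unbounded_in lt (fun _ => True) X -> otp_ge lt lt X.

Lemma no_inj_below j (p : A -> A) : (forall x, lt (p x) j) -> (forall x y, p x = p y -> x = y) -> False.
Proof.
  intros Hp Hinj.
  pose (R := fun x => forall y, lt (p y) (p x) -> lt y x).
  assert (HR : unbounded_in lt (fun _ => True) R).
  { intros x _. 
    assert (wf' : well_founded (fun a b => lt (p a) (p b))).
    { apply (wf_inverse_image A A lt p w_wf). }
    assert (exists y, le lt x y /\ forall z, le lt x z -> ~ lt (p z) (p y)).
    { apply NNPP; intro Hn.
      assert (forall y, ~ le lt x y).
      { intro y. induction y as [y IH] using (well_founded_ind wf').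
        intro Hy. apply Hn. exists y. split; auto. intros z Hz Hlt. exact (IH z Hlt Hz). }
      apply (H x). apply w_le_refl. }
    destruct H as [y [Hy Hmin]]. exists y. split; [|split; auto].
    intros z Hz. apply NNPP; intro h. apply (Hmin z); auto.
    eapply w_le_trans; eauto. apply w_nlt_le; auto. }
  destruct (Hcof R HR) as [f [Hf HfR]].
  pose (q := fun a => p (f a)).
  assert (Hq : forall a b, lt a b -> lt (q a) (q b)).
  { intros a b h. unfold q. destruct (w_tot (p (f a)) (p (f b))) as [h1|[h1|h1]]; auto.
    - apply Hinj in h1. apply Hf in h. rewrite h1 in h. exfalso; eapply w_irr; eauto.
    - apply HfR in h1. apply Hf in h. exfalso; apply (w_irr (f a)); eapply w_trans; eauto. }
  apply (w_lt_nle _ _ (Hp (f j))). apply (mono_ge q Hq j).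
Qed.

Lemma bound_gen (I : Type) : ~ (exists p : A -> I, forall x y, p x = p y -> x = y) ->
  forall h : I -> A, exists z, forall i, lt (h i) z.
Proof.
  intros Hni h. apply NNPP; intro Hn.
  assert (Hu : unbounded_in lt (fun _ => True) (fun y => exists i, h i = y)).
  { intros x _. apply NNPP; intro Hx. apply Hn. exists x. intro i.
    apply NNPP; intro hi. apply Hx. exists (h i). split; eauto. split; auto.
    apply w_nlt_le; auto. }
  destruct (Hcof _ Hu) as [f [Hf Hfi]].
  apply Hni. exists (fun a => proj1_sig (constructive_indefinite_description _ (Hfi a))).
  intros a b E.
  destruct (constructive_indefinite_description _ (Hfi a)) as [ia Ha].
  destruct (constructive_indefinite_description _ (Hfi b)) as [ib Hb]. simpl in E. subst.
  apply (mono_inj A lt f w_tot Hf). congruence.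
Qed.

Lemma bound_below j (h : {i | lt i j} -> A) : exists z, forall i, lt (h i) z.
Proof.
  apply bound_gen. intros [p Hp].
  apply (no_inj_below j (fun x => proj1_sig (p x))).
  - intro x. exact (proj2_sig (p x)).
  - intros x y E. apply Hp. destruct (p x), (p y); simpl in E; subst. f_equal. apply proof_irrelevance.
Qed.
End Reg.
End Gen.

Lemma reg_wo A (lt : A -> A -> Prop) : regular lt -> well_order lt.
Proof. intros [h _]; auto. Qed.
Lemma reg_cof A (lt : A -> A -> Prop) : regular lt ->
  forall X, unbounded_in lt (fun _ => True) X -> otp_ge lt lt X.
Proof. intros [_ [_ [_ h]]] X HX. apply h; auto. intros x _; auto. Qed.
Lemma reg_inh A (lt : A -> A -> Prop) : regular lt -> inhabited A.
Proof. intros [_ [[f _] _]]. exact (inhabits (f 0)). Qed.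

Section Enum.
Variables (K : Type) (ltK : K -> K -> Prop).
Hypothesis HK : regular ltK.

Lemma enum_unb (B : K -> Prop) : (forall a, exists b, B b /\ ltK a b) ->
  exists g : K -> K, (forall a b, ltK a b -> ltK (g a) (g b)) /\ (forall a, B (g a)) /\
    (forall y, B y -> exists a, g a = y).
Proof.
  intro HB. pose proof (reg_wo _ _ HK) as wo. pose proof (reg_inh _ _ HK) as inh.
  pose (F := fun a (rec : forall b, ltK b a -> K) => epsilon inh (fun y => B y /\
     (forall b (p : ltK b a), ltK (rec b p) y) /\
     forall y', B y' -> (forall b (p : ltK b a), ltK (rec b p) y') -> le ltK y y')).
  pose (g := Fix (w_wf _ _ wo) (fun _ => K) F).
  assert (Hg : forall a, g a = epsilon inh (fun y => B y /\
     (forall b, ltK b a -> ltK (g b) y) /\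
     forall y', B y' -> (forall b, ltK b a -> ltK (g b) y') -> le ltK y y')).
  { intro a. unfold g at 1. rewrite Fix_eq. reflexivity.
    intros x f1 f2 Hf. assert (f1 = f2) as ->; auto.
    apply functional_extensionality_dep; intro y. apply functional_extensionality_dep; intro p. auto. }
  assert (Hs : forall a, B (g a) /\ (forall b, ltK b a -> ltK (g b) (g a)) /\
     forall y', B y' -> (forall b, ltK b a -> ltK (g b) y') -> le ltK (g a) y').
  { intro a. rewrite (Hg a). apply epsilon_spec.
    destruct (bound_below K ltK wo (reg_cof _ _ HK) a (fun b => g (proj1_sig b))) as [z Hz].
    destruct (HB z) as [y0 [By0 Hy0]].
    destruct (w_least _ _ wo (fun y => B y /\ forall b, ltK b a -> ltK (g b) y)) as [y [[By Hy] Hmin]].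
    { exists y0. split; auto. intros b hb. eapply (w_trans _ _ wo). apply (Hz (exist _ b hb)). auto. }
    exists y. split; [auto|split; [auto|]]. intros y' By' H'. apply Hmin; auto. }
  exists g. split; [|split].
  - intros a b h. apply (Hs b); auto.
  - intro a; apply Hs.
  - intros y By.
    assert (Hmono : forall a b, ltK a b -> ltK (g a) (g b)) by (intros a b h; apply (Hs b); auto).
    destruct (w_least _ _ wo (fun a => le ltK y (g a))) as [a [Ha Hmin]].
    { exists y. apply (mono_ge _ _ wo g Hmono). }
    exists a. apply (w_antisym _ _ wo); auto. apply (Hs a); auto.
    intros b hb. apply NNPP; intro h. apply (w_nlt_le _ _ wo) in h.
    apply Hmin in h. exact (w_lt_nle _ _ wo _ _ hb h).
Qed.
End Enum.

Lemma set_ext A (P Q : A -> Prop) : (forall x, P x <-> Q x) -> P = Q.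
Proof. intro H; apply functional_extensionality; intro x; apply propositional_extensionality; auto. Qed.

Section LL.
Variables (K : Type) (ltK : K -> K -> Prop) (L : Type) (ltL : L -> L -> Prop).
Hypothesis HK : regular ltK.
Hypothesis HL : regular ltL.
Hypothesis HKL : succ_card_lt K ltL.

Let wo := reg_wo _ _ HL.
Let cofL := reg_cof _ _ HL.

Lemma no_inj_nat : ~ exists p : L -> nat, forall x y, p x = p y -> x = y.
Proof.
  intros [p Hp]. destruct HK as [_ [[e He] _]]. destruct HKL as [d0 Hd0].
  apply Hd0. exists (fun x => e (p (proj1_sig x))). intros [x hx] [y hy] E. simpl in E.
  apply He, Hp in E. subst. f_equal. apply proof_irrelevance.
Qed.

Lemma boundL_nat (s : nat -> L) : exists z, forall n, ltL (s n) z.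
Proof. apply (bound_gen _ _ wo cofL). apply no_inj_nat. Qed.

Lemma club_strict C : club ltL C -> forall x, exists y, C y /\ ltL x y.
Proof.
  intros [_ [_ HU]] x. destruct (boundL_nat (fun _ => x)) as [z Hz].
  destruct (HU z I) as [y [Cy [_ Hy]]]. exists y; split; auto. eapply (w_lt_le _ _ wo); eauto. apply (Hz 0).
Qed.

Lemma club_inter (I : Type) (Hb : forall h : I -> L, exists z, forall i, ltL (h i) z)
  (C : I -> L -> Prop) : (forall i, club ltL (C i)) -> club ltL (fun x => forall i, C i x).
Proof.
  intro HC. split; [|split].
  - intros x _; auto.
  - intros g _ [y [Hy Hyg]] Hcof i. destruct (HC i) as [_ [Hcl _]]. apply Hcl; auto.
    + exists y; auto.
    + intros x hx. destruct (Hcof x hx) as [y' [h1 h2]]. exists y'; auto.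
  - intros x _. destruct (classic (inhabited I)) as [[i0]|Hn].
    + destruct (omega_lim _ _ wo I (fun _ => True) C) with (x := x) as [g [_ [Hxg Hg]]]; auto.
      * intros i y _. destruct (club_strict _ (HC i) y) as [z [h1 h2]]. exists z; auto.
      * intros h _. destruct (Hb h) as [z Hz]. exists z. split; auto. intro i; left; auto.
      * intros s _. destruct (boundL_nat s) as [z Hz]. exists z; auto.
      * exists g. split. intro i. destruct (HC i) as [_ [Hcl _]]. apply Hcl; auto; apply Hg.
        split; auto. left; auto.
    + exists x. split. intro i; exfalso; apply Hn; constructor; auto. split; auto. right; auto.
Qed.

Lemma club2 P Q : club ltL P -> club ltL Q -> club ltL (fun x => P x /\ Q x).
Proof.
  intros HP HQ.
  assert (H := club_inter bool) . 
  assert (Hb : forall h : bool -> L, exists z, forall i, ltL (h i) z).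
  { intro h. destruct (boundL_nat (fun n => match n with 0 => h true | _ => h false end)) as [z Hz].
    exists z. intros []; [apply (Hz 0)|apply (Hz 1)]. }
  specialize (H Hb).
  specialize (H (fun b => if b then P else Q)).
  replace (fun x => P x /\ Q x) with (fun x => forall i : bool, (if i then P else Q) x).
  - apply H. intros []; auto.
  - apply set_ext. intro x. split. intro h; split; [apply (h true)|apply (h false)].
    intros [h1 h2] []; auto.
Qed.

Lemma club_below j (C : L -> L -> Prop) : (forall i, ltL i j -> club ltL (C i)) ->
  club ltL (fun x => forall i, ltL i j -> C i x).
Proof.
  intro HC.
  assert (H := club_inter {i | ltL i j} (bound_below _ _ wo cofL j) (fun s => C (proj1_sig s))).
  replace (fun x => forall i, ltL i j -> C i x) with (fun x => forall s : {i | ltL i j}, C (proj1_sig s) x).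
  - apply H. intros [i hi]; simpl; auto.
  - apply set_ext. intro x. split.
    + intros h i hi. apply (h (exist _ i hi)).
    + intros h [i hi]; simpl; auto.
Qed.

Lemma lim_in E : club ltL E -> forall g, lim L ltL E g -> E g.
Proof. intros [_ [Hcl _]] g [h1 h2]. apply Hcl; auto. Qed.

Lemma club_lim E : club ltL E -> club ltL (lim L ltL E).
Proof.
  intro HE. split; [|split].
  - intros x _; auto.
  - intros g _ [a [Ha Hag]] Hcof. split.
    + destruct Ha as [[y [Ey Hy]] _]. exists y. split; auto. eapply (w_trans _ _ wo); eauto.
    + intros w Hw. destruct (Hcof w Hw) as [a' [Ha' [h1 h2]]].
      destruct Ha' as [_ Ha']. destruct (Ha' w h1) as [y [Ey [h3 h4]]].
      exists y. split; auto. split; auto. eapply (w_trans _ _ wo); eauto.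
  - intros x _. destruct (omega_lim _ _ wo unit (fun _ => True) (fun _ => E)) with (x := x)
      as [g [_ [Hxg Hg]]]; auto.
    + intros i y _. destruct (club_strict _ HE y) as [z [h1 h2]]. exists z; auto.
    + intros h _. exists (h tt). split; auto. intros []; right; auto.
    + intros s _. destruct (boundL_nat s) as [z Hz]. exists z; auto.
    + exists g. split. apply (Hg tt). split; auto. left; auto.
Qed.

Lemma lim_mono (X Y : L -> Prop) g : (forall x, Y x -> X x) -> lim L ltL Y g -> lim L ltL X g.
Proof.
  intros H [[y [h1 h2]] h3]. split. exists y; auto.
  intros w hw. destruct (h3 w hw) as [z [a b]]. exists z; auto.
Qed.

Section DD.
Hypothesis HKunc : uncountable K.
Variables (d : L) (c : L -> Prop).
Hypothesis Hcd : cof_is ltL ltK (below ltL d).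
Hypothesis Hc : club_in ltL (below ltL d) c.
Hypothesis Hco : otp_eq ltL ltK c.

Lemma bound_nat_below (s : nat -> L) : (forall n, ltL (s n) d) ->
  exists z, ltL z d /\ forall n, ltL (s n) z.
Proof.
  intro Hs. apply NNPP; intro Hn.
  assert (Hu : unbounded_in ltL (below ltL d) (fun y => exists n, s n = y)).
  { intros x Hx. apply NNPP; intro Hx'. apply Hn. exists x. split; auto. intro n.
    apply NNPP; intro h. apply Hx'. exists (s n). split; eauto. split. apply Hs.
    apply (w_nlt_le _ _ wo); auto. }
  destruct Hcd as [_ Hcd2].
  destruct (Hcd2 _ (fun y hy => match hy with ex_intro _ n e => eq_ind _ (fun y => below ltL d y) (Hs n) _ e end) Hu)
    as [f [Hf Hfi]].
  apply HKunc. exists (fun a => proj1_sig (constructive_indefinite_description _ (Hfi a))).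
  intros a b E.
  destruct (constructive_indefinite_description _ (Hfi a)) as [ia Ha].
  destruct (constructive_indefinite_description _ (Hfi b)) as [ib Hb]. simpl in E. subst.
  apply (mono_inj L ltL wo K ltK f (w_tot _ _ (reg_wo _ _ HK)) Hf). congruence.
Qed.

Lemma inter_below X : club ltL X -> lim L ltL X d ->
  forall x, ltL x d -> exists g, ltL g d /\ ltL x g /\ c g /\ X g.
Proof.
  intros HX HXd x hx.
  destruct Hc as [Hcs [Hccl Hcu]].
  destruct (omega_lim _ _ wo bool (below ltL d) (fun b => if b then c else X)) with (x := x)
    as [g [Dg [Hxg Hg]]]; auto.
  - intros a b hb hab. eapply (w_le_lt _ _ wo); eauto.
  - intros [] y hy.
    + destruct HXd as [_ HXd]. destruct (HXd y hy) as [z [Xz [h1 h2]]].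
      destruct (Hcu z h2) as [w [cw [dw hw]]]. exists w. split; auto. split; auto.
      eapply (w_lt_le _ _ wo); eauto.
    + destruct HXd as [_ HXd]. destruct (HXd y hy) as [z [Xz [h1 h2]]]. exists z; auto.
  - intros h Dh. destruct (w_tot _ _ wo (h true) (h false)) as [e|[e|e]].
    + exists (h false). split; auto. intros []; [left; auto|right; auto].
    + exists (h false). split; auto. intros []; [right; auto|right; auto].
    + exists (h true). split; auto. intros []; [right; auto|left; auto].
  - intros s Ds. apply bound_nat_below; auto.
  - exists g. split; auto. split; auto. split.
    + apply Hccl; auto; apply (Hg true).
    + apply (lim_in X HX). apply (Hg false).
Qed.

Lemma sup_otp X : club ltL X -> lim L ltL X d ->
  is_sup ltL (fun x => c x /\ X x) d /\ otp_eq ltL ltK (fun x => c x /\ X x).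
Proof.
  intros HX HXd. pose proof (inter_below X HX HXd) as Hib.
  pose proof Hc as [Hcs _].
  split.
  - split.
    + intros y [cy _]. left. apply Hcs; auto.
    + intros z Hz. destruct (w_tot _ _ wo z d) as [e|[e|e]].
      * destruct (Hib z e) as [g [h1 [h2 [h3 h4]]]]. exfalso. apply (w_lt_nle _ _ wo _ _ h2). apply Hz; auto.
      * right; auto.
      * left; auto.
  - destruct Hco as [f [Hf [Hfc Hfo]]].
    pose proof (reg_wo _ _ HK) as woK.
    destruct (enum_unb K ltK HK (fun a => X (f a))) as [g [Hg1 [Hg2 Hg3]]].
    { intro a. destruct (Hib (f a)) as [y [h1 [h2 [h3 h4]]]]. apply Hcs; auto.
      destruct (Hfo y h3) as [b Hb]. subst. exists b. split; auto.
      destruct (w_tot _ _ woK a b) as [e|[e|e]]; auto; exfalso.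
      subst. exact (w_irr _ _ wo _ h2).
      apply Hf in e. apply (w_irr _ _ wo (f a)). eapply (w_trans _ _ wo); eauto. }
    exists (fun a => f (g a)). split; [|split].
    + intros a b h. apply Hf, Hg1; auto.
    + intro a. split; auto.
    + intros y [cy Xy]. destruct (Hfo y cy) as [b Hb]. subst.
      destruct (Hg3 b Xy) as [a Ha]. exists a. congruence.
Qed.
End DD.
End LL.

Lemma club_full L (ltL : L -> L -> Prop) : club ltL (fun _ => True).
Proof. unfold club, club_in, subset, closed_in, unbounded_in. split; [|split].
  - auto.
  - auto.
  - intros x _. exists x. split; auto. split; auto. right; auto. Qed.

Theorem mainTheorem3
  (K : Type) (ltK : K -> K -> Prop) (L : Type) (ltL : L -> L -> Prop)
  (HK : regular ltK) (HL : regular ltL)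
  (HKunc : uncountable K) (HKL : succ_card_lt K ltL)
  (S : L -> Prop)
  (HScof : forall d, S d -> cof_is ltL ltK (below ltL d))
  (HSstat : stationary ltL S)
  (c : L -> L -> Prop)
  (Hc : forall d, S d -> club_in ltL (below ltL d) (c d) /\ otp_eq ltL ltK (c d))
  (E' : L -> Prop) (HE' : club ltL E') :
  exists E : L -> Prop,
    club ltL E /\ subset E E' /\
    (forall d, S d -> closed_subset_of ltL (below ltL d) (fun x => c d x /\ E x)) /\
    (forall E'' : L -> Prop, club ltL E'' ->
       stationary ltL (fun d => S d /\
         subset (fun x => c d x /\ E x) E'' /\
         is_sup ltL (fun x => c d x /\ E x) d /\
         otp_eq ltL ltK (fun x => c d x /\ E x))).
Proof.
  pose proof (reg_wo _ _ HL) as wo.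
  assert (H1cl : forall X, club ltL X -> forall d, S d -> closed_subset_of ltL (below ltL d) (fun x => c d x /\ X x)).
  { intros X [_ [HXc _]] d Sd. destruct (Hc d Sd) as [[Hcs [Hccl _]] _]. split.
    - intros x [h _]; auto.
    - intros g Hg [y [[h1 h2] h3]] Hcof. split.
      + apply Hccl; auto. exists y; auto. intros x hx. destruct (Hcof x hx) as [z [[a b] e]]. exists z; auto.
      + apply HXc; auto. exists y; auto. intros x hx. destruct (Hcof x hx) as [z [[a b] e]]. exists z; auto. }
  apply NNPP; intro Hno.
  pose (Bad := fun X Y => forall d, Y d -> S d -> ~ (subset (fun x => c d x /\ X x) Y /\
        is_sup ltL (fun x => c d x /\ X x) d /\ otp_eq ltL ltK (fun x => c d x /\ X x))).
  assert (H1 : forall X, exists Y, club ltL Y /\ (club ltL X -> subset X E' -> Bad X Y)).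
  { intro X. destruct (classic (club ltL X /\ subset X E')) as [[HX HXE]|HX].
    2:{ exists (fun _ => True). split. apply club_full. intros a b; tauto. }
    destruct (classic (forall E'' : L -> Prop, club ltL E'' ->
       stationary ltL (fun d => S d /\ subset (fun x => c d x /\ X x) E'' /\
         is_sup ltL (fun x => c d x /\ X x) d /\ otp_eq ltL ltK (fun x => c d x /\ X x)))) as [Hall|Hn].
    { exfalso. apply Hno. exists X. split; [auto|split; [auto|split; [apply H1cl; auto|exact Hall]]]. }
    apply not_all_ex_not in Hn. destruct Hn as [E'' Hn].
    apply imply_to_and in Hn. destruct Hn as [HE'' Hns].
    unfold stationary in Hns. apply not_all_ex_not in Hns. destruct Hns as [F Hns].
    apply imply_to_and in Hns. destruct Hns as [HF Hns].
    exists (fun x => E'' x /\ F x). split. apply (club2 K ltK L ltL HK HL HKL); auto.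
    intros _ _ d [h1 h2] Sd [Hs [Hsup Hotp]]. apply Hns. exists d. split; auto.
    split; auto. split; auto. intros x hx. apply Hs; auto. }
  pose (inh := inhabits (fun _ : L => True)).
  pose (G := fun X => epsilon inh (fun Y => club ltL Y /\ (club ltL X -> subset X E' -> Bad X Y))).
  assert (HG : forall X, club ltL (G X) /\ (club ltL X -> subset X E' -> Bad X (G X))).
  { intro X. apply epsilon_spec. apply H1. }
  pose (F := fun j (rec : forall i, ltL i j -> L -> Prop) =>
              fun x => E' x /\ forall i (p : ltL i j), G (rec i p) x).
  pose (Es := Fix (w_wf _ _ wo) (fun _ => L -> Prop) F).
  assert (HEs : forall j, Es j = fun x => E' x /\ forall i, ltL i j -> G (Es i) x).
  { intro j. unfold Es at 1. rewrite Fix_eq. reflexivity.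
    intros x f1 f2 Hf. assert (f1 = f2) as ->; auto.
    apply functional_extensionality_dep; intro y. apply functional_extensionality_dep; intro p. auto. }
  assert (Eclub : forall j, club ltL (Es j)).
  { intro j. rewrite HEs. apply (club2 K ltK L ltL HK HL HKL); auto.
    apply (club_below K ltK L ltL HK HL HKL j (fun i => G (Es i))). intros i _. apply HG. }
  assert (EsE : forall j, subset (Es j) E').
  { intros j x. rewrite HEs. tauto. }
  assert (EsG : forall i j, ltL i j -> subset (Es j) (G (Es i))).
  { intros i j h x. rewrite HEs. intros [_ H]. auto. }
  assert (EsM : forall i j, ltL i j -> subset (Es j) (Es i)).
  { intros i j h x. rewrite (HEs j), (HEs i). intros [a b]. split; auto.
    intros k hk. apply b. eapply (w_trans _ _ wo); eauto. }
  destruct HKL as [d0 Hd0].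
  destruct (HSstat _ (club_lim K ltK L ltL HK HL (ex_intro _ d0 Hd0) _ (Eclub d0))) as [d [Sd Hd]].
  assert (Ed : Es d0 d) by (apply (lim_in _ _ _ (Eclub d0)); auto).
  destruct (Hc d Sd) as [Hcd Hco].
  assert (Hx : forall s : {i | ltL i d0}, exists x, c d x /\ Es (proj1_sig s) x /\ ~ G (Es (proj1_sig s)) x).
  { intros [i hi]. simpl.
    assert (Hlim : lim L ltL (Es i) d).
    { apply (lim_mono _ _ _ (Es d0)); auto. apply EsM; auto. }
    destruct (sup_otp K ltK L ltL HK HL HKunc d (c d) (HScof d Sd) Hcd Hco (Es i) (Eclub i) Hlim) as [Hsup Hotp].
    pose proof (proj2 (HG (Es i)) (Eclub i) (EsE i) d (EsG i d0 hi d Ed) Sd) as HB.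
    apply NNPP; intro Hn. apply HB. split; auto. intros x [h1 h2]. apply NNPP; intro h3.
    apply Hn. exists x; auto. }
  destruct Hco as [f [Hf [Hfc Hfo]]].
  pose (xs := fun s => proj1_sig (constructive_indefinite_description _ (Hx s))).
  assert (Hxs : forall s, c d (xs s) /\ Es (proj1_sig s) (xs s) /\ ~ G (Es (proj1_sig s)) (xs s)).
  { intro s. unfold xs. destruct (constructive_indefinite_description _ (Hx s)); auto. }
  assert (Hpre : forall s, exists a, f a = xs s) by (intro s; apply Hfo, Hxs).
  apply Hd0. exists (fun s => proj1_sig (constructive_indefinite_description _ (Hpre s))).
  assert (Hxinj : forall s t, xs s = xs t -> s = t).
  { intros [i hi] [k hk] E.
    destruct (w_tot _ _ wo i k) as [e|[e|e]].
    - exfalso. pose proof (Hxs (exist _ i hi)) as [_ [_ a]]. pose proof (Hxs (exist _ k hk)) as [_ [b _]].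
      simpl in *. apply a. rewrite E. apply (EsG i k e); auto.
    - subst. f_equal. apply proof_irrelevance.
    - exfalso. pose proof (Hxs (exist _ k hk)) as [_ [_ a]]. pose proof (Hxs (exist _ i hi)) as [_ [b _]].
      simpl in *. apply a. rewrite <- E. apply (EsG k i e); auto. }
  intros s t E. apply Hxinj.
  destruct (constructive_indefinite_description _ (Hpre s)) as [a Ha].
  destruct (constructive_indefinite_description _ (Hpre t)) as [b Hb]. simpl in E. subst. congruence.
Qed.
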